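(* Let $X$ be a complex Banach space and let $(Q,V)$ be a bounded symmetric pair of $X$. Let $V_0\subset V^Q$ be a closed linear subspace. Let $h\in\{1,-1\}$ and $c\ge0$. Let $\alpha$ be a closed linear subspace of $V$ that is positive semi-definite with respect to $hQ$, and let $\beta$ be a closed linear subspace of $V$ that is negative definite with respect to $hQ$, with $V_0=\beta^{Q|_\beta}$ and $\gamma(Q|_\beta)>0$. Assume that $V=\alpha\oplus\beta$ is a $Q$-orthogonal direct sum decomposition. Then there is $\varepsilon>0$ such that for every bounded symmetric pair $(R,W)$ of $X$ and every closed linear subspace $W_0\subset W^R$ with $\hat\delta(V,W)<\varepsilon$, $\delta(V_0,W_0)<\varepsilon$ and $\delta_c(Q,R)<\varepsilon$, we have $$m^+(hR)+\dim W^R/W_0\le \dim\alpha.$$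
   Context: A bounded symmetric pair $(Q,V)$ consists of a closed subspace $V\subset X$ and a Hermitian sesquilinear form $Q\colon V\times V\to\mathbb{C}$ with $\sup_{x,y\in V\setminus\{0\}}|Q(x,y)|/(\|x\|\|y\|)<\infty$. For a subset $\lambda\subset V$, $\lambda^Q:=\{u\in V: Q(u,v)=0\ \forall v\in\lambda\}$; in particular $V^Q$ is the radical of $Q$, and for a subspace $\beta\subset V$, $\beta^{Q|_\beta}:=\{u\in\beta: Q(u,v)=0\ \forall v\in\beta\}$. For a bounded semi-definite form $Q$ on $V$, $\gamma(Q):=\inf_{x\in V\setminus V^Q}|Q(x,x)|/\operatorname{dist}(x,V^Q)^2$ (and $0$ if $V=\{0\}$). $m^+(hR)$ is the supremum of the dimensions of subspaces of $W$ on which $hR$ is positive definite. $Q$-orthogonal means $Q(a,b)=0$ for $a\in\alpha$, $b\in\beta$. For linear subspaces $A,B$: $\delta(A,B):=\sup_{u\in A,\|u\|=1}\operatorname{dist}(u,B)$ ($0$ if $A=\{0\}$), $\hat\delta(A,B):=\max\{\delta(A,B),\delta(B,A)\}$. For bounded symmetric pairs $(Q,V)$, $(R,W)$ and $c\ge0$, $\delta_c(Q,R)$ is the infimum of $\delta\ge0$ such that $|Q(x,y)-R(u,v)|\le\delta(\|u\|+\|x\|)(\|v\|+\|y\|)+c\big((\|u\|+\|x\|)\|v-y\|+\|u-x\|(\|v\|+\|y\|)\big)$ for all $x,y\in V$, $u,v\in W$. *)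

(* Defs.v *)
From HB Require Import structures.
From mathcomp Require Import all_boot all_order all_algebra.
From mathcomp Require Import complex.
From mathcomp Require Import all_classical all_reals all_analysis.
Import Order.TTheory GRing.Theory Num.Theory.
Import numFieldNormedType.Exports.

Set Implicit Arguments.
Unset Strict Implicit.
Unset Printing Implicit Defensive.

Local Open Scope classical_set_scope.
Local Open Scope ring_scope.
Local Open Scope complex_scope.

Section Defs.
Context {R : realType} {X : normedModType R[i]}.

Definition cabs (z : R[i]) : R := complex.Re `|z|.
Definition nrm (x : X) : R := complex.Re `|x|.

Definition is_subspace (V : set X) : Prop :=
  V 0 /\ forall (a : R[i]) x y, V x -> V y -> V (a *: x + y).
Definition closed_subspace (V : set X) : Prop := is_subspace V /\ closed V.

Definition bounded_symmetric_pair (Q : X -> X -> R[i]) (V : set X) : Prop :=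
  [/\ closed_subspace V,
      (forall (a : R[i]) x y z, V x -> V y -> V z ->
          Q (a *: x + y) z = a * Q x z + Q y z),
      (forall (a : R[i]) x y z, V x -> V y -> V z ->
          Q z (a *: x + y) = a^* * Q z x + Q z y),
      (forall x y, V x -> V y -> Q y x = (Q x y)^*) &
      (exists M : R, forall x y, V x -> V y ->
          cabs (Q x y) <= M * nrm x * nrm y)].

Definition Qorth (Q : X -> X -> R[i]) (V lambda : set X) : set X :=
  [set u | V u /\ forall v, lambda v -> Q u v = 0].
(* radical V^Q ; for a subspace beta, beta^{Q|beta} = Qorth Q beta beta *)
Definition radical (Q : X -> X -> R[i]) (V : set X) : set X := Qorth Q V V.

Definition pos_semidef (h : R[i]) (Q : X -> X -> R[i]) (S : set X) : Prop :=
  forall x, S x -> 0 <= h * Q x x.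
Definition pos_def (h : R[i]) (Q : X -> X -> R[i]) (S : set X) : Prop :=
  forall x, S x -> x != 0 -> 0 < h * Q x x.
Definition neg_def (h : R[i]) (Q : X -> X -> R[i]) (S : set X) : Prop :=
  forall x, S x -> x != 0 -> h * Q x x < 0.

Definition Qorth_direct_sum (Q : X -> X -> R[i]) (V alpha beta : set X) : Prop :=
  [/\ (forall v, V v <-> exists a b, [/\ alpha a, beta b & v = a + b]),
      (forall x, alpha x -> beta x -> x = 0) &
      (forall a b, alpha a -> beta b -> Q a b = 0)].

Definition dist (u : X) (B : set X) : \bar R :=
  ereal_inf [set (nrm (u - b))%:E | b in B].

Definition gamma (Q : X -> X -> R[i]) (V : set X) : \bar R :=
  if `[< V = [set 0] >] then 0%E
  else ereal_inf [set ((cabs (Q x x)) / (fine (dist x (radical Q V))) ^+ 2)%:E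
                 | x in [set x | V x /\ ~ radical Q V x]].

Definition gap (A B : set X) : \bar R :=
  ereal_sup ([set 0%E] `|` [set dist u B | u in [set u | A u /\ nrm u = 1]]).
Definition gap_hat (A B : set X) : \bar R := maxe (gap A B) (gap B A).

Definition delta_c (c : R) (Q : X -> X -> R[i]) (V : set X)
    (S : X -> X -> R[i]) (W : set X) : \bar R :=
  ereal_inf [set d%:E | d in [set d : R | 0 <= d /\
     forall x y u v, V x -> V y -> W u -> W v ->
       cabs (Q x y - S u v) <=
         d * (nrm u + nrm x) * (nrm v + nrm y)
         + c * ((nrm u + nrm x) * nrm (v - y) + nrm (u - x) * (nrm v + nrm y))]].

Definition lin_indep_mod (S0 : set X) (n : nat) (v : 'I_n -> X) : Prop :=
  forall a : 'I_n -> R[i], S0 (\sum_(i < n) a i *: v i) -> forall i, a i = 0.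

Definition dim_quot (S S0 : set X) : \bar R :=
  ereal_sup [set (n%:R)%:E | n in
    [set n : nat | exists v : 'I_n -> X, (forall i, S (v i)) /\ lin_indep_mod S0 v]].

Definition dimension (S : set X) : \bar R := dim_quot S [set 0].

Definition m_plus (h : R[i]) (S : X -> X -> R[i]) (W : set X) : \bar R :=
  ereal_sup [set dimension U | U in
    [set U | [/\ is_subspace U, U `<=` W & pos_def h S U]]].

End Defs.

(* Main.v *)
Set Warnings "-all".
Require Import Defs.
From HB Require Import structures.
From mathcomp Require Import all_boot all_order all_algebra.
From mathcomp Require Import complex.
From mathcomp Require Import all_classical all_reals all_analysis.
From mathcomp Require Import ring lra.
Import Order.TTheory GRing.Theory Num.Theory.
Import numFieldNormedType.Exports.

Set Implicit Arguments.
Unset Strict Implicit.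
Unset Printing Implicit Defensive.
Local Open Scope classical_set_scope.
Local Open Scope ring_scope.
Local Open Scope complex_scope.
Section NormHelpers.
Context {R : realType} {X : normedModType R[i]}.
Implicit Types (x y : X) (a b : R[i]).

Lemma ge0_real (p : R[i]) : 0 <= p -> p = (complex.Re p)%:C.
Proof. move=> hp. rewrite {1}[p]complexE (ger0_Im hp). by rewrite mulr0 addr0. Qed.

Lemma Re_ge0 (p : R[i]) : 0 <= p -> 0 <= complex.Re p.
Proof. by rewrite lecE => /andP[]. Qed.

Lemma Re_le (p q : R[i]) : p <= q -> complex.Re p <= complex.Re q.
Proof. by rewrite lecE => /andP[]. Qed.

Lemma ReD (p q : R[i]) : complex.Re (p + q) = complex.Re p + complex.Re q.
Proof. by case: p; case: q. Qed.

Lemma ReN (p : R[i]) : complex.Re (- p) = - complex.Re p.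
Proof. by case: p. Qed.

Lemma ReRM (r : R) (p : R[i]) : complex.Re (r%:C * p) = r * complex.Re p.
Proof. case: p => a b /=. by rewrite mul0r subr0. Qed.

Lemma nrmE x : `|x| = (nrm x)%:C.
Proof. by rewrite /nrm -ge0_real. Qed.

Lemma cabsE a : `|a| = (cabs a)%:C.
Proof. by rewrite /cabs -ge0_real. Qed.

Lemma nrm_ge0 x : 0 <= nrm x.
Proof. exact: Re_ge0. Qed.

Lemma cabs_ge0 a : 0 <= cabs a.
Proof. exact: Re_ge0. Qed.

Lemma nrmD x y : nrm (x + y) <= nrm x + nrm y.
Proof. by rewrite /nrm -ReD; apply: Re_le; apply: ler_normD. Qed.

Lemma cabsD a b : cabs (a + b) <= cabs a + cabs b.
Proof. by rewrite /cabs -ReD; apply: Re_le; apply: ler_normD. Qed.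

Lemma nrmZ a x : nrm (a *: x) = cabs a * nrm x.
Proof. by rewrite /nrm normrZ cabsE ReRM. Qed.

Lemma cabsM a b : cabs (a * b) = cabs a * cabs b.
Proof. by rewrite /cabs normrM cabsE ReRM. Qed.

Lemma nrmN x : nrm (- x) = nrm x.
Proof. by rewrite /nrm normrN. Qed.

Lemma cabsN a : cabs (- a) = cabs a.
Proof. by rewrite /cabs normrN. Qed.

Lemma nrmB x y : nrm (x - y) = nrm (y - x).
Proof. by rewrite -nrmN opprB. Qed.

Lemma cabsB a b : cabs (a - b) = cabs (b - a).
Proof. by rewrite -cabsN opprB. Qed.

Lemma nrm0 : nrm (0 : X) = 0.
Proof. by rewrite /nrm normr0. Qed.

Lemma nrm_eq0 x : nrm x = 0 -> x = 0.
Proof. move=> h; apply/eqP; rewrite -normr_eq0 nrmE h. by []. Qed.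

Lemma cabs_eq0 a : cabs a = 0 -> a = 0.
Proof. move=> h; apply/eqP; rewrite -normr_eq0 cabsE h. by []. Qed.

Lemma cabs0 : cabs (0 : R[i]) = 0.
Proof. by rewrite /cabs normr0. Qed.

Lemma cabs1 : cabs (1 : R[i]) = 1.
Proof. by rewrite /cabs normr1. Qed.

Lemma cabsR (r : R) : 0 <= r -> cabs r%:C = r.
Proof. move=> hr; rewrite /cabs ger0_norm //. by rewrite lecR. Qed.

Lemma Re_le_cabs a : complex.Re a <= cabs a.
Proof.
rewrite /cabs; apply: le_trans (Re_le (normc_ge_Re a)) => /=.
exact: ler_norm.
Qed.

Lemma absRe_le_cabs a : `|complex.Re a| <= cabs a.
Proof. exact: (Re_le (normc_ge_Re a)). Qed.

Lemma absIm_le_cabs a : `|complex.Im a| <= cabs a.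
Proof.
have := absRe_le_cabs (a * 'i%C). rewrite ReiNIm normrN cabsM.
suff -> : cabs ('i%C : R[i]) = 1 by rewrite mulr1.
rewrite /cabs. have -> : `|'i%C| = 1 :> R[i].
  by rewrite complexiE normCi.
by [].
Qed.

Lemma nrm_sum (I : Type) (r : seq I) (P : pred I) (F : I -> X) :
  nrm (\sum_(i <- r | P i) F i) <= \sum_(i <- r | P i) nrm (F i).
Proof.
elim/big_rec2: _; first by rewrite nrm0.
move=> i y1 y2 _ hy; apply: le_trans (nrmD _ _) _; exact: lerD.
Qed.

Lemma cabs_sum (I : Type) (r : seq I) (P : pred I) (F : I -> R[i]) :
  cabs (\sum_(i <- r | P i) F i) <= \sum_(i <- r | P i) cabs (F i).
Proof.
elim/big_rec2: _; first by rewrite cabs0.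
move=> i y1 y2 _ hy; apply: le_trans (cabsD _ _) _; exact: lerD.
Qed.

End NormHelpers.
Section Lin.
Context {R : realType} {X : normedModType R[i]}.
Implicit Types (Z : set X).

Lemma subsp0 Z : is_subspace Z -> Z 0.
Proof. by case. Qed.
Lemma subspD Z x y : is_subspace Z -> Z x -> Z y -> Z (x + y).
Proof. by case=> _ h hx hy; have := h 1 _ _ hx hy; rewrite scale1r. Qed.
Lemma subspZ Z a x : is_subspace Z -> Z x -> Z (a *: x).
Proof. by case=> h0 h hx; have := h a _ _ hx h0; rewrite addr0. Qed.
Lemma subspN Z x : is_subspace Z -> Z x -> Z (- x).
Proof. by move=> hZ hx; rewrite -scaleN1r; apply: subspZ. Qed.
Lemma subspB Z x y : is_subspace Z -> Z x -> Z y -> Z (x - y).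
Proof. by move=> hZ hx hy; apply: subspD => //; apply: subspN. Qed.
Lemma subsp_sum Z (I : Type) (r : seq I) (P : pred I) (F : I -> X) :
  is_subspace Z -> (forall i, P i -> Z (F i)) -> Z (\sum_(i <- r | P i) F i).
Proof.
move=> hZ hF; elim/big_rec: _; first exact: subsp0.
by move=> i x Pi hx; apply: subspD => //; apply: hF.
Qed.

Lemma steinitz (p j : nat) (x : 'I_p -> X) (z : nat -> X) : (j < p)%N ->
  (forall i, exists c : nat -> R[i], x i = \sum_(l < j) c l *: z l) ->
  exists t : 'I_p -> R[i], \sum_(i < p) t i *: x i = 0 /\ exists i, t i != 0.
Proof.
move=> hjp hx.
have [cF hcF] := choice hx.
pose M : 'M[R[i]]_(p, j) := \matrix_(i < p, l < j) cF i l.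
have nf : kermx M != 0.
  rewrite kermx_eq0 /row_free; apply/negP => /eqP hr.
  by have := rank_leq_col M; rewrite hr leqNgt hjp.
have [k [l hkl]] : exists k l, kermx M k l != 0.
  case: (pselect (exists k l, kermx M k l != 0)) => // hn; exfalso.
  move/negP: nf; apply; apply/eqP/matrixP => a b.
  have -> : (0 : 'M[R[i]]_p) a b = 0 by rewrite mxE.
  apply/eqP/negP => hab; apply: hn; exists a, b; exact/negP.
exists (fun i => kermx M k i); split; last by exists l.
have e : forall l0 : 'I_j, \sum_(i < p) kermx M k i * M i l0 = 0.
  move=> l0; move: (mulmx_ker M) => /matrixP /(_ k l0).
  by rewrite !mxE.
rewrite (eq_bigr (fun i => \sum_(l0 < j) (kermx M k i * M i l0) *: z l0)); last first.
  move=> i _; rewrite (hcF i) scaler_sumr; apply: eq_bigr => l0 _.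
  by rewrite scalerA [M i l0]mxE.
rewrite exchange_big /=; apply: big1 => l0 _.
by rewrite -scaler_suml e scale0r.
Qed.

End Lin.
Section Cauchy.
Context {R : realType} {X : normedModType R[i]}.

Lemma small_zero (a B : R) : 0 <= a -> (forall m : nat, a <= B / m.+1%:R) -> a = 0.
Proof.
move=> a0 hm; apply/eqP; rewrite eq_le a0 andbT; apply/negP => /negP.
rewrite -ltNge => apos.
have B0 : 0 <= B by have := hm 0%N; rewrite divr1 => /(le_trans a0).
have := archi_boundP (divr_ge0 B0 (ltW apos)).
set m := Num.Def.archi_bound _ => hb.
have := hm m; rewrite ler_pdivlMr ?ltr0Sn // => h2.
have : B / a * a < m.+1%:R * a.
  rewrite ltr_pM2r //; apply: lt_le_trans hb _; rewrite ler_nat; exact: leqnSn.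
rewrite divfK ?gt_eqF // mulrC => h3.
by have := lt_le_trans h3 h2; rewrite ltxx.
Qed.

Lemma cauchy_lim (r : nat -> R) (C : R) :
  (forall m l, `|r m - r l| <= C / m.+1%:R + C / l.+1%:R) ->
  exists L, forall m, `|r m - L| <= C / m.+1%:R.
Proof.
move=> hc.
pose E := [set r m - C / m.+1%:R | m in [set: nat]].
have ub : forall l, ubound E (r l + C / l.+1%:R).
  move=> l x [m _ <-]; have := hc m l; rewrite ler_norml => /andP[_ h].
  move: h; set a := C / _; set b := C / _; move=> h; lra.
have hE : has_ubound E by exists (r 0%N + C / 1%:R); exact: ub.
have nE : E !=set0 by exists (r 0%N - C / 1%:R), 0%N.
exists (sup E) => m; rewrite ler_norml; apply/andP; split.
- have := ge_sup nE (ub m); set a := C / _; move=> h; lra.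
- have : r m - C / m.+1%:R <= sup E by apply: ub_le_sup => //; exists m.
  set a := C / _; move=> h; lra.
Qed.

Lemma cabs_real (r : R) : cabs r%:C = `|r|.
Proof.
case: (lerP 0 r) => hr; first by rewrite cabsR // ger0_norm.
have e : r%:C = - ((- r)%:C) :> R[i].
  by apply/eqP; rewrite eq_complex /= opprK oppr0 !eqxx.
by rewrite ltr0_norm // e cabsN cabsR // oppr_ge0 ltW.
Qed.

Lemma cabs_le_ReIm (a : R[i]) : cabs a <= `|complex.Re a| + `|complex.Im a|.
Proof.
rewrite {1}[a]complexE; apply: le_trans (cabsD _ _) _.
rewrite cabsM !cabs_real; suff -> : cabs ('i%C : R[i]) = 1 by rewrite mul1r.
rewrite /cabs. have -> : `|'i%C| = 1 :> R[i] by rewrite complexiE normCi.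
by [].
Qed.

Lemma ReB (p q : R[i]) : complex.Re (p - q) = complex.Re p - complex.Re q.
Proof. by case: p; case: q. Qed.
Lemma ImB (p q : R[i]) : complex.Im (p - q) = complex.Im p - complex.Im q.
Proof. by case: p; case: q. Qed.

Lemma ccauchy_lim (c : nat -> R[i]) (C : R) :
  (forall m l, cabs (c m - c l) <= C / m.+1%:R + C / l.+1%:R) ->
  exists L, forall m, cabs (c m - L) <= (C + C) / m.+1%:R.
Proof.
move=> hc.
have [Lr hLr] : exists L, forall m, `|complex.Re (c m) - L| <= C / m.+1%:R.
  apply: cauchy_lim => m l; rewrite -ReB; apply: le_trans (hc m l).
  exact: absRe_le_cabs.
have [Li hLi] : exists L, forall m, `|complex.Im (c m) - L| <= C / m.+1%:R.
  apply: cauchy_lim => m l; rewrite -ImB; apply: le_trans (hc m l).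
  exact: absIm_le_cabs.
exists (Lr +i* Li) => m; apply: le_trans (cabs_le_ReIm _) _.
rewrite ReB ImB /= mulrDl; exact: lerD.
Qed.

End Cauchy.
Section Riesz.
Context {R : realType} {X : normedModType R[i]}.

Definition lsum (j : nat) (t : nat -> R[i]) (z : nat -> X) :=
  \sum_(i < j) t i *: z i.

Lemma le_sum_one (j : nat) (F : nat -> R) (i : nat) :
  (forall k, 0 <= F k) -> (i < j)%N -> F i <= \sum_(k < j) F k.
Proof.
move=> F0 hi; rewrite (bigD1 (Ordinal hi)) //= lerDl.
by apply: sumr_ge0 => k _.
Qed.

Lemma sub_sub_eq (x a b : X) : (x - b) - (x - a) = a - b.
Proof. by rewrite opprB addrC addrA subrK. Qed.

Lemma lsumB j t1 t2 z :
  lsum j (fun i => t1 i - t2 i) z = lsum j t1 z - lsum j t2 z.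
Proof. by rewrite /lsum -sumrB; apply: eq_bigr => i _; rewrite scalerBl. Qed.

Lemma lsumD j t1 t2 z :
  lsum j (fun i => t1 i + t2 i) z = lsum j t1 z + lsum j t2 z.
Proof. by rewrite /lsum -big_split; apply: eq_bigr => i _; rewrite scalerDl. Qed.

Lemma lsumZ j k t z :
  lsum j (fun i => k * t i) z = k *: lsum j t z.
Proof. by rewrite /lsum scaler_sumr; apply: eq_bigr => i _; rewrite scalerA. Qed.

Lemma nrm_lsum j t z :
  nrm (lsum j t z) <= \sum_(i < j) cabs (t i) * nrm (z i).
Proof.
apply: le_trans (nrm_sum _ _ _) _; apply: ler_sum => i _; by rewrite nrmZ.
Qed.

Lemma span_dist (j : nat) (z : nat -> X) (K : R) (x : X) :
  0 <= K ->
  (forall t : nat -> R[i], \sum_(i < j) cabs (t i) <= K * nrm (lsum j t z)) ->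
  (forall t : nat -> R[i], x <> lsum j t z) ->
  exists2 d, 0 < d & forall t, d <= nrm (x - lsum j t z).
Proof.
move=> K0 hK hx.
case: (pselect (exists2 d, 0 < d & forall t, d <= nrm (x - lsum j t z))) => // hn.
exfalso.
have hT : forall m : nat, exists t, nrm (x - lsum j t z) < m.+1%:R^-1.
  move=> m; apply: contrapT => hne; apply: hn; exists (m.+1%:R^-1).
    by rewrite invr_gt0 ltr0Sn.
  move=> t; rewrite leNgt; apply/negP => h; apply: hne; exists t; exact: h.
have [T hTm] := choice hT.
have hc : forall i, (i < j)%N -> forall m l,
    cabs (T m i - T l i) <= K / m.+1%:R + K / l.+1%:R.
  move=> i hi m l.
  have := le_sum_one (F := fun k => cabs (T m k - T l k)) (fun k => cabs_ge0 _) hi.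
  move=> /= hs; apply: le_trans hs _.
  apply: le_trans (hK (fun k => T m k - T l k)) _.
  rewrite lsumB.
  have -> : lsum j (T m) z - lsum j (T l) z =
     (x - lsum j (T l) z) - (x - lsum j (T m) z).
    by rewrite sub_sub_eq.
  rewrite -mulrDr; apply: ler_wpM2l => //.
  apply: le_trans (nrmD _ _) _; rewrite nrmN addrC.
  by apply: lerD; apply: ltW.
have hL : forall i, exists L, (i < j)%N -> forall m,
    cabs (T m i - L) <= (K + K) / m.+1%:R.
  move=> i; case: (ltnP i j) => hi.
    have [L hL] := ccauchy_lim (hc i hi); by exists L.
  by exists 0.
have [L hLi] := choice hL.
pose B := 1 + (K + K) * \sum_(i < j) nrm (z i).
have hb : forall m : nat, nrm (x - lsum j L z) <= B / m.+1%:R.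
  move=> m.
  have -> : x - lsum j L z = (x - lsum j (T m) z) + lsum j (fun i => T m i - L i) z.
    by rewrite lsumB addrA subrK.
  apply: le_trans (nrmD _ _) _.
  rewrite /B mulrDl mul1r; apply: lerD; first exact: ltW.
  apply: le_trans (nrm_lsum _ _ _) _.
  rewrite mulrAC mulr_sumr; apply: ler_sum => i _.
  apply: ler_wpM2r; first exact: nrm_ge0.
  exact: hLi.
have := small_zero (nrm_ge0 _) hb => /nrm_eq0 /eqP; rewrite subr_eq0 => /eqP.
exact: hx.
Qed.

Definition rfam (j : nat) (z : nat -> X) :=
  forall i, (i < j)%N -> nrm (z i) = 1 /\
    forall t : nat -> R[i], 1 / 2 <= nrm (z i - lsum i t z).

Fixpoint Kc (n : nat) : R := match n with 0 => 0 | S n => 3 * Kc n + 2 end.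

Lemma Kc_ge0 n : 0 <= Kc n.
Proof. elim: n => //= n IH; lra. Qed.

Lemma rfam_bound j z : rfam j z ->
  forall t : nat -> R[i], \sum_(i < j) cabs (t i) <= Kc j * nrm (lsum j t z).
Proof.
elim: j => [|j IH] hr t.
  by rewrite big_ord0 /= mul0r.
have hr' : rfam j z by move=> i hi; apply: hr; apply: ltnW.
have [z1 hzj] := hr j (ltnSn j).
set s := lsum j.+1 t z.
have es : s = lsum j t z + t j *: z j by rewrite /s /lsum big_ord_recr.
have h1 : cabs (t j) <= 2 * nrm s.
  case: (eqVneq (t j) 0) => htj.
    by rewrite htj cabs0; apply: mulr_ge0 => //; exact: nrm_ge0.
  have -> : s = t j *: (z j - lsum j (fun l => - (t l / t j)) z).
    rewrite es scalerBr addrC; congr (_ + _).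
    rewrite /lsum scaler_sumr -sumrN; apply: eq_bigr => i _.
    by rewrite scalerA mulrN scaleNr opprK mulrCA mulfV // mulr1.
  rewrite nrmZ; have := hzj (fun l => - (t l / t j)).
  have := cabs_ge0 (t j); set a := cabs _; set b := nrm _ => ha hb. nra.
have h2 : nrm (lsum j t z) <= 3 * nrm s.
  have -> : lsum j t z = s - t j *: z j by rewrite es addrK.
  apply: le_trans (nrmD _ _) _; rewrite nrmN nrmZ z1 mulr1; lra.
rewrite big_ord_recr /=.
have := IH hr' t; have := Kc_ge0 j; have := nrm_ge0 (lsum j t z).
move: h1 h2; set a := cabs _; set b := nrm s; set c := nrm _; set S := \sum_(i < j) _.
set k := Kc j => h1 h2 hc hk hS. nra.
Qed.

Lemma riesz_step (j : nat) (z : nat -> X) (x : X) : rfam j z ->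
  (forall t, x <> lsum j t z) ->
  exists y, [/\ nrm y = 1, (forall t, 1 / 2 <= nrm (y - lsum j t z)) &
    exists (t0 : nat -> R[i]) (k : R[i]), y = k *: (x - lsum j t0 z)].
Proof.
move=> hr hx.
have [d d0 hd] := span_dist (Kc_ge0 j) (rfam_bound hr) hx.
pose E := [set nrm (x - lsum j t z) | t in [set: nat -> R[i]]].
have nE : E !=set0 by exists (nrm (x - lsum j (fun=> 0) z)), (fun=> 0).
have lbE : lbound E d by move=> _ [t _ <-]; exact: hd.
have dD : d <= inf E by exact: lb_le_inf.
have hlb : has_lbound E by exists d.
have [_ [t0 _ <-] ht0] : exists2 e, E e & e < inf E + inf E.
  apply: inf_lt => //; lra.
set n0 := nrm _ in ht0.
have n0pos : 0 < n0 by apply: lt_le_trans d0 _; exact: hd.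
exists ((n0^-1)%:C *: (x - lsum j t0 z)); split.
- by rewrite nrmZ cabsR ?invr_ge0 ?ltW // mulVf ?gt_eqF.
- move=> t.
  have -> : (n0^-1)%:C *: (x - lsum j t0 z) - lsum j t z =
      (n0^-1)%:C *: (x - lsum j (fun i => t0 i + n0%:C * t i) z).
    have c1 : (n0^-1)%:C * n0%:C = 1 :> R[i].
      by rewrite -rmorphM /= mulVf ?gt_eqF.
    rewrite lsumD lsumZ !scalerBr scalerDr scalerA c1 scale1r.
    by rewrite opprD addrA.
  rewrite nrmZ cabsR; last by rewrite invr_ge0 ltW.
  have : inf E <= nrm (x - lsum j (fun i => t0 i + n0%:C * t i) z).
    by apply: ge_inf => //; eexists.
  set w := nrm _ => hw.
  have e : n0 * (n0^-1 * w) = w by rewrite mulrA mulfV ?gt_eqF // mul1r.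
  rewrite -(ler_pM2l n0pos) e; lra.
- by exists t0, (n0^-1)%:C.
Qed.

End Riesz.
Section Build.
Context {R : realType} {X : normedModType R[i]}.

Lemma esup_add_le (A B : set (\bar R)) (r : R) :
  (exists2 a0, A a0 & (0 <= a0)%E) -> B 0%E ->
  (forall a b, A a -> B b -> (a + b <= r%:E)%E) ->
  (ereal_sup A + ereal_sup B <= r%:E)%E.
Proof.
move=> [a0 Aa0 a00] B0 h.
have a0fin : a0 \is a fin_num.
  have := h a0 0%E Aa0 B0; rewrite adde0.
  by rewrite ge0_fin_numE // => /le_lt_trans; apply; exact: ltey.
have sBr : (ereal_sup B <= r%:E - a0)%E.
  apply: ge_ereal_sup => b Bb; rewrite lee_suber_addl //; exact: h.
have sB0 : (0 <= ereal_sup B)%E by exact: ereal_sup_ubound.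
have sBfin : ereal_sup B \is a fin_num.
  rewrite ge0_fin_numE //; apply: le_lt_trans sBr _.
  have : (r%:E - a0)%E \is a fin_num by rewrite fin_numB a0fin.
  by move/fin_numPlt => /andP[].
rewrite -lee_suber_addr //; apply: ge_ereal_sup => a Aa.
rewrite lee_suber_addl //.
move: (h a 0%E Aa B0); rewrite adde0.
case: a Aa => [a| |] Aa ha.
- have : (ereal_sup B <= r%:E - a%:E)%E.
    apply: ge_ereal_sup => b Bb; rewrite lee_suber_addl //; exact: h.
  by rewrite lee_suber_addr.
- by [].
- by rewrite addeNy leNye.
Qed.

Lemma build (Zs : set X) (p : nat) (y : 'I_p -> X) :
  is_subspace Zs -> (forall i, Zs (y i)) -> lin_indep_mod [set 0] y ->
  forall j, (j <= p)%N -> exists z, rfam j z /\ forall i, (i < j)%N -> Zs (z i).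
Proof.
move=> hZ hy hind; elim=> [|j IH] hj.
  by exists (fun=> 0); split => // i.
have [z [hr hzZ]] := IH (ltnW hj).
have [i0 hi0] : exists i, forall t, y i <> lsum j t z.
  apply: contrapT => hn.
  have hsp : forall i, exists c : nat -> R[i], y i = \sum_(l < j) c l *: z l.
    move=> i; apply: contrapT => hne; apply: hn; exists i => t ht.
    by apply: hne; exists t.
  have [t [ht0 [i hti]]] := steinitz hj hsp.
  by move/eqP: hti; apply; apply: hind.
have [y' [y1 hy' [t0 [k ey']]]] := riesz_step hr hi0.
pose z' := fun n => if n == j then y' else z n.
have zlsum : forall i t, (i <= j)%N -> lsum i t z' = lsum i t z.
  move=> i t hi; apply: eq_bigr => l _; rewrite /z'.
  by have := ltn_ord l => hl; rewrite ifF //; apply/negbTE; rewrite neq_ltn (leq_trans hl hi).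
exists z'; split.
- move=> i; rewrite ltnS leq_eqVlt => /orP[/eqP ->|hi].
    by rewrite /z' eqxx; split => // t; rewrite zlsum.
  have [zi1 hzi] := hr i hi.
  rewrite /z' ifF; last by apply/negbTE; rewrite neq_ltn hi.
  by split => // t; rewrite zlsum // ltnW.
- move=> i; rewrite ltnS leq_eqVlt => /orP[/eqP ->|hi].
    rewrite /z' eqxx ey'; apply: subspZ => //; apply: subspB => //.
    apply: subsp_sum => // l _; apply: subspZ => //; exact: hzZ.
  by rewrite /z' ifF; [exact: hzZ|apply/negbTE; rewrite neq_ltn hi].
Qed.

End Build.
Section Core.
Context {R : realType} {X : normedModType R[i]}.

Lemma Re_sub_le (h a b : R[i]) : cabs h = 1 ->
  complex.Re (h * a) - complex.Re (h * b) <= cabs (b - a).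
Proof.
move=> h1; rewrite -ReB -mulrBr; apply: le_trans (Re_le_cabs _) _.
by rewrite cabsM h1 mul1r cabsB.
Qed.

Lemma arith (g c eps d K s e nv T RS RQ C : R) :
  0 < g -> 0 <= c -> 1 <= K -> eps = g / (2 * K * (g + 25 + 20 * c * K)) ->
  0 <= d -> d < eps -> 0 < s -> T <= K * s -> e <= eps * T -> 0 <= e ->
  nv <= s + e -> s - e <= nv -> 0 <= RS -> RQ <= - (g * nv ^+ 2) ->
  RS - RQ <= C -> C <= d * (s + nv) * (s + nv) + c * ((s + nv) * e + e * (s + nv)) ->
  False.
Proof.
move=> g0 c0 K1 heps d0 deps s0 hT he e0 nvu nvl hRS hRQ hC hCb.
set L := g + 25 + 20 * c * K.
have cK : 0 <= c * K by apply: mulr_ge0 => //; lra.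
have L0 : 0 < L by rewrite /L; lra.
have eps0 : 0 < eps by rewrite heps; apply: divr_gt0 => //; apply: mulr_gt0 => //; lra.
set q := eps * K.
have hq : q * (2 * L) = g.
  rewrite /q heps -/L; field.
  by rewrite !lt0r_neq0 //; lra.
have q0 : 0 < q by rewrite /q; apply: mulr_gt0 => //; lra.
have ecmp : eps <= q by rewrite /q; nra.
have eqs : e <= q * s.
  apply: le_trans he _; rewrite /q -mulrA; apply: ler_wpM2l; lra.
have qh : q <= 1 / 2.
  have gL : g < L by rewrite /L; lra.
  rewrite leNgt; apply/negP => hq2.
  have : 1 / 2 * (2 * L) < q * (2 * L) by rewrite ltr_pM2r //; lra.
  rewrite hq; lra.
have nvl2 : s / 2 <= nv by nra.
have snv : s + nv <= 5 / 2 * s by nra.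
have snv0 : 0 <= s + nv by nra.
have t1 : g * (s ^+ 2 / 4) <= g * nv ^+ 2.
  apply: ler_wpM2l; first lra.
  have : (s / 2) * (s / 2) <= nv * nv by apply: ler_pM; lra.
  rewrite !expr2; lra.
have t2 : d * (s + nv) * (s + nv) <= eps * (25 / 4 * s ^+ 2).
  have : (s + nv) * (s + nv) <= (5 / 2 * s) * (5 / 2 * s) by apply: ler_pM; lra.
  rewrite expr2 => h0; have h : (s + nv) * (s + nv) <= 25 / 4 * (s * s) by lra.
  rewrite -mulrA; apply: le_trans (ler_wpM2l d0 h) _.
  apply: ler_wpM2r; last lra.
  by apply: mulr_ge0; [lra|apply: mulr_ge0; lra].
have t3 : c * ((s + nv) * e + e * (s + nv)) <= c * (5 * q * s ^+ 2).
  apply: ler_wpM2l => //.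
  have : (s + nv) * e <= 5 / 2 * s * (q * s) by apply: ler_pM; lra.
  rewrite expr2; lra.
have t4 : eps * (25 + 20 * c * K) < g.
  have : q * (25 + 20 * c * K) < q * (2 * L) by rewrite ltr_pM2l // /L; lra.
  rewrite hq; apply: le_lt_trans; apply: ler_wpM2r; last exact: ecmp.
  lra.
have s2 : 0 < s ^+ 2 by rewrite exprn_gt0.
have : 0 <= - (g * (s ^+ 2 / 4)) + eps * (25 / 4 * s ^+ 2) + c * (5 * q * s ^+ 2).
  lra.
rewrite /q; nra.
Qed.

Lemma tri1 (a b : X) : nrm b <= nrm a + nrm (a - b).
Proof.
have {1}-> : b = a - (a - b) by rewrite opprB addrC subrK.
by apply: le_trans (nrmD _ _) _; rewrite nrmN.
Qed.

Lemma tri2 (a b : X) : nrm a <= nrm b + nrm (a - b).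
Proof. by rewrite nrmB tri1. Qed.

Lemma core (V alpha beta W Zs : set X) (Q S : X -> X -> R[i]) (h : R[i])
    (c g eps d : R) (N : nat) (z : nat -> X) :
  (forall a : 'I_N.+1 -> X, (forall i, alpha (a i)) -> ~ lin_indep_mod [set 0] a) ->
  (forall v, V v -> exists a b, [/\ alpha a, beta b & v = a + b]) ->
  is_subspace V -> is_subspace beta ->
  (forall b, beta b -> complex.Re (h * Q b b) <= - (g * nrm b ^+ 2)) ->
  cabs h = 1 -> 0 <= c -> 0 < g ->
  eps = g / (2 * (Kc N.+1 + 1) * (g + 25 + 20 * c * (Kc N.+1 + 1))) ->
  0 <= d -> d < eps ->
  (forall x y u v, V x -> V y -> W u -> W v ->
       cabs (Q x y - S u v) <=
         d * (nrm u + nrm x) * (nrm v + nrm y)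
         + c * ((nrm u + nrm x) * nrm (v - y) + nrm (u - x) * (nrm v + nrm y))) ->
  (forall w, W w -> nrm w = 1 -> exists2 v, V v & nrm (w - v) < eps) ->
  is_subspace Zs -> Zs `<=` W -> (forall y, Zs y -> 0 <= complex.Re (h * S y y)) ->
  rfam N.+1 z -> (forall i, (i < N.+1)%N -> Zs (z i)) -> False.
Proof.
move=> hal hdec hV hbeta hneg h1 c0 g0 heps d0 deps hdc hnear hZ hZW hZpos hr hzZ.
set P := N.+1 in hal hr hzZ heps *.
set K := Kc P + 1 in heps.
have K1 : 1 <= K by rewrite /K lerDr Kc_ge0.
have eps0 : 0 < eps.
  rewrite heps; apply: divr_gt0 => //; apply: mulr_gt0; first by lra.
  have : 0 <= 20 * c * K by apply: mulr_ge0 => //; lra.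
  lra.
have hv : forall i, exists vab : X * X * X, (i < P)%N ->
    [/\ V vab.1.1, nrm (z i - vab.1.1) < eps, alpha vab.1.2, beta vab.2 &
        vab.1.1 = vab.1.2 + vab.2].
  move=> i; case: (ltnP i P) => hi; last by exists (0, 0, 0).
  have [z1 _] := hr i hi.
  have [v Vv hvz] := hnear (z i) (hZW _ (hzZ i hi)) z1.
  have [a [b [Aa Bb eab]]] := hdec v Vv.
  by exists (v, a, b); split => //.
have [F hF] := choice hv.
pose vf i := (F i).1.1; pose af i := (F i).1.2; pose bf i := (F i).2.
have [tau [htau0 [i0 hi0]]] : exists tau : 'I_P -> R[i],
    \sum_(i < P) tau i *: af i = 0 /\ exists i, tau i != 0.
  apply: contrapT => hne; apply: (hal (fun i : 'I_P => af i)).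
    by move=> i; have [] := hF i (ltn_ord i).
  move=> tau hs i; apply: contrapT => hti; apply: hne; exists tau; split => //.
  by exists i; apply/eqP.
pose t n := if (n < P)%N then tau (inord n) else 0.
have tE : forall i : 'I_P, t i = tau i by move=> i; rewrite /t ltn_ord inord_val.
set zz := lsum P t z.
set vv := lsum P t vf.
have vvb : beta vv.
  have -> : vv = lsum P t bf.
    have -> : vv = lsum P t af + lsum P t bf.
      rewrite /vv /lsum -big_split; apply: eq_bigr => i _ /=; rewrite -scalerDr.
      by rewrite /vf /af /bf; have [_ _ _ _ ->] := hF i (ltn_ord i).
    suff -> : lsum P t af = 0 by rewrite add0r.
    by rewrite -htau0; apply: eq_bigr => i _; rewrite tE.
  apply: subsp_sum => // i _; apply: subspZ => //.
  by have [] := hF i (ltn_ord i).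
have zzZ : Zs zz.
  apply: subsp_sum => // i _; apply: subspZ => //; exact: hzZ.
set s := nrm zz.
set T := \sum_(i < P) cabs (t i).
have T0 : 0 < T.
  have := le_sum_one (F := fun i => cabs (t i)) (fun i => cabs_ge0 _) (ltn_ord i0).
  rewrite /= tE => hle; apply: lt_le_trans hle.
  rewrite lt_def cabs_ge0 andbT; apply/eqP => /cabs_eq0 /eqP; exact/negP.
have hTK : T <= Kc P * s := rfam_bound hr t.
have s0 : 0 <= s := nrm_ge0 _.
have TK : T <= K * s.
  apply: (le_trans hTK); apply: ler_wpM2r => //; have eK : K = Kc P + 1 by []. by rewrite eK lerDl.
have spos : 0 < s.
  rewrite lt_def s0 andbT; apply/eqP => hs; move: TK; rewrite hs mulr0.
  by rewrite leNgt T0.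
set e := nrm (zz - vv).
have he : e <= eps * T.
  rewrite /e; have -> : zz - vv = lsum P t (fun i => z i - vf i).
    by rewrite /zz /vv /lsum -sumrB; apply: eq_bigr => i _; rewrite scalerBr.
  apply: le_trans (nrm_lsum _ _ _) _; rewrite /T mulr_sumr; apply: ler_sum => i _.
  rewrite mulrC; apply: ler_wpM2r; first exact: cabs_ge0.
  by have [_ /ltW] := hF i (ltn_ord i).
set nv := nrm vv.
have nv_up : nv <= s + e by exact: tri1.
have nv_lo : s - e <= nv by have := tri2 zz vv; rewrite -/s -/nv -/e; lra.
have hS0 := hZpos _ zzZ.
have hQn := hneg _ vvb.
have hdiff := Re_sub_le (S zz zz) (Q vv vv) h1.
have vvV : V vv.
  apply: subsp_sum => // i _; apply: subspZ => //.
  by have [] := hF i (ltn_ord i).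
have hb := hdc vv vv zz zz vvV vvV (hZW _ zzZ) (hZW _ zzZ).
rewrite -/s -/nv -/e in hb.
exact: (arith g0 c0 K1 heps d0 deps spos TK he (nrm_ge0 _) nv_up nv_lo hS0 hQn hdiff hb).
Qed.

End Core.

Section Split.
Context {T : Type} (m k : nat) (u : 'I_m -> T) (r : 'I_k -> T).
Definition catf (i : 'I_(m + k)) : T :=
  match fintype.split i with inl a => u a | inr b => r b end.
Lemma catf_l a : catf (lshift k a) = u a.
Proof.
rewrite /catf; case: splitP => [a' /= e|b' /= e].
  by congr u; apply: val_inj.
by have := ltn_ord a; rewrite e -ltn_subRL subnn.
Qed.
Lemma catf_r b : catf (rshift m b) = r b.
Proof.
rewrite /catf; case: splitP => [a' /= e|b' /= e].
  by have := ltn_ord a'; rewrite -e ltnNge leq_addr.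
by congr r; apply: val_inj => /=; move/eqP: e; rewrite eqn_add2l => /eqP.
Qed.
End Split.

Lemma eps_pos {R : realType} (g c K : R) : 0 < g -> 0 <= c -> 1 <= K ->
  0 < g / (2 * K * (g + 25 + 20 * c * K)).
Proof.
move=> g0 c0 K1; apply: divr_gt0 => //; apply: mulr_gt0; first by lra.
have : 0 <= 20 * c * K by apply: mulr_ge0 => //; lra.
lra.
Qed.

Unset Implicit Arguments.
Set Strict Implicit.

Theorem theorem1p7 (R : realType) (X : completeNormedModType R[i])
    (Q : X -> X -> R[i]) (V V0 alpha beta : set X) (h : R[i]) (c : R) :
  bounded_symmetric_pair Q V ->
  closed_subspace V0 -> V0 `<=` radical Q V ->
  (h = 1 \/ h = -1) -> 0 <= c ->
  closed_subspace alpha -> alpha `<=` V -> pos_semidef h Q alpha ->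
  closed_subspace beta -> beta `<=` V -> neg_def h Q beta ->
  V0 = radical Q beta -> (0 < gamma Q beta)%E ->
  Qorth_direct_sum Q V alpha beta ->
  exists eps : R, 0 < eps /\
    forall (S : X -> X -> R[i]) (W W0 : set X),
      bounded_symmetric_pair S W ->
      closed_subspace W0 -> W0 `<=` radical S W ->
      (gap_hat V W < eps%:E)%E -> (gap V0 W0 < eps%:E)%E ->
      (delta_c c Q V S W < eps%:E)%E ->
      (m_plus h S W + dim_quot (radical S W) W0 <= dimension alpha)%E.
Proof.
move=> hQ hV0 hV0r hh hc0 halpha hav hpsa hbeta hbv hnd hV0eq hgam hds.
case: hQ => hVc hQl hQr hQh _.
have hVs : is_subspace V := hVc.1.
have hbs : is_subspace beta := hbeta.1.
have Q0 : forall z, V z -> Q 0 z = 0.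
  move=> z Vz; have := hQl 1 0 0 z (subsp0 hVs) (subsp0 hVs) Vz.
  rewrite scale1r addr0 mul1r => e.
  by apply/eqP; rewrite -(addrI (Q 0 z) (etrans (esym e) (esym (addr0 _)))).
have h1 : cabs h = 1 by case: hh => ->; rewrite ?cabsN cabs1.
have radb : radical Q beta = [set 0].
  apply/seteqP; split => x.
  - move=> [bx hx]; apply: contrapT => hx0.
    have := hnd x bx (introN eqP hx0); by rewrite (hx x bx) mulr0 ltxx.
  - move=> ->; split; first exact: subsp0.
    by move=> v bv; apply: Q0; apply: hbv.
have bne : beta <> [set 0].
  by move=> e; move: hgam; rewrite /gamma asboolT // ltxx.
have hG : forall b, beta b -> b != 0 ->
    (gamma Q beta <= (cabs (Q b b) / nrm b ^+ 2)%:E)%E.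
  move=> b bb b0; rewrite /gamma asboolF //.
  apply: ereal_inf_lbound; exists b.
    by split => //; rewrite radb => /eqP; apply/negP.
  by rewrite radb /dist image_set1 ereal_inf1 /= subr0.
have [g g0 hg] : exists2 g : R, 0 < g &
    forall b, beta b -> b != 0 -> g <= cabs (Q b b) / nrm b ^+ 2.
  move: hgam hG; case: (gamma Q beta) => [r| |] hgam hG.
  - exists r; first by rewrite -lte_fin.
    by move=> b bb b0; have := hG b bb b0; rewrite lee_fin.
  - exists 1 => // b bb b0; by have := hG b bb b0.
  - by [].
have hneg : forall b, beta b -> complex.Re (h * Q b b) <= - (g * nrm b ^+ 2).
  move=> b bb; case: (eqVneq b 0) => [->|b0].
    rewrite (Q0 0); last exact: hbv (subsp0 hbs).
    by rewrite mulr0 nrm0 expr0n /= mulr0 oppr0.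
  have hlt := hnd b bb b0; have hgb := hg b bb b0.
  have nb0 : 0 < nrm b.
    rewrite lt_def nrm_ge0 andbT; apply/eqP => /nrm_eq0 /eqP; exact/negP.
  move: hlt; rewrite ltcE => /andP[/eqP hIm hRe].
  have e : h * Q b b = (complex.Re (h * Q b b))%:C.
    by rewrite {1}[h * Q b b]complexE -hIm /= mulr0 addr0.
  have ec : cabs (Q b b) = - complex.Re (h * Q b b).
    rewrite -[cabs (Q b b)]mul1r -h1 -cabsM e cabs_real ltr0_norm //.
  move: hgb; rewrite ler_pdivlMr ?exprn_gt0 // ec; lra.
have hdec : forall v, V v -> exists a b, [/\ alpha a, beta b & v = a + b].
  by case: hds => hds1 _ _ v Vv; apply/hds1.
have hD0 : (0 <= dimension alpha)%E.
  apply: ereal_sup_ubound; exists 0%N => //; exists (fun=> 0); split; first by case.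
  by move=> a _ [].
case hDv : (dimension alpha) hD0 => [r| |] hD0; last by [].
  2: by exists 1; split => // *; exact: leey.
have [N hN1 hN2] : exists2 N : nat, N%:R <= r & r < N.+1%:R.
  have r0 : 0 <= r by rewrite -lee_fin.
  have ex : exists n : nat, r < n%:R by exists (Num.Def.archi_bound r); exact: archi_boundP.
  have [m hm hmin] := find_ex_minn ex.
  case: m hm hmin => [|N] hm hmin; first by move: hm; rewrite ltNge r0.
  exists N => //; rewrite leNgt; apply/negP => hNr.
  by have := hmin N hNr; rewrite ltnn.
have hal : forall a : 'I_N.+1 -> X, (forall i, alpha (a i)) -> ~ lin_indep_mod [set 0] a.
  move=> a ha hind.
  have : ((N.+1)%:R%:E <= dimension alpha)%E.
    by apply: ereal_sup_ubound; exists N.+1 => //; exists a.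
  by rewrite hDv lee_fin leNgt hN2.
pose K : R := Kc N.+1 + 1.
have K1 : 1 <= K by rewrite /K lerDr Kc_ge0.
exists (g / (2 * K * (g + 25 + 20 * c * K))); split; first exact: eps_pos.
set eps := g / _.
move=> S W W0 hS hW0 hW0r hgap _ hdc.
case: hS => hWc hSl hSr hSh _.
have hWs : is_subspace W := hWc.1.
have [_ [d [d0 hd] <-] hdlt] := ereal_inf_lt hdc.
rewrite lte_fin in hdlt.
move: hgap; rewrite /gap_hat gt_max => /andP[_ hgWV].
have hnear : forall w, W w -> nrm w = 1 -> exists2 v, V v & nrm (w - v) < eps.
  move=> w Ww w1.
  have : (dist w V <= gap W V)%E.
    by apply: ereal_sup_ubound; right; exists w.
  move=> /le_lt_trans /(_ hgWV) /ereal_inf_lt [_ [v Vv <-]].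
  by rewrite lte_fin => hv; exists v.
have S0 : forall w, W w -> S 0 w = 0.
  move=> w Ww; have := hSl 1 0 0 w (subsp0 hWs) (subsp0 hWs) Ww.
  rewrite scale1r addr0 mul1r => e.
  by apply/eqP; rewrite -(addrI (S 0 w) (etrans (esym e) (esym (addr0 _)))).
have hradS : is_subspace (radical S W).
  split; first by split; [exact: subsp0|exact: S0].
  move=> a x y [Wx hx] [Wy hy]; split; first by case: hWs => _; apply.
  by move=> v Wv; rewrite hSl // hx // hy // mulr0 addr0.
rewrite /m_plus /dim_quot; apply: esup_add_le.
- exists (dimension ([set 0] : set X)).
    exists [set 0] => //; split.
    + by split => // a x y -> ->; rewrite scaler0 addr0.
    + by move=> x ->; exact: subsp0.
    + by move=> x -> /eqP.
  apply: ereal_sup_ubound; exists 0%N => //; exists (fun=> 0); split => //.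
  by move=> a _ [].
- by exists 0%N => //; exists (fun=> 0); split => //; [case|move=> a _ []].
move=> _ _ [U [hU hUW hUp] <-] [k [rr [hrr hrind]] <-].
rewrite -lee_suber_addr //; apply: ge_ereal_sup => _ [m [u [hu huind]] <-].
rewrite lee_suber_addr // -EFinD lee_fin -natrD.
suff hmk : (m + k <= N)%N by apply: le_trans hN1; rewrite ler_nat.
rewrite leqNgt; apply/negP => hlt.
pose Zs := [set y | exists2 u', U u' & exists2 r', radical S W r' & y = u' + r'].
have hZs : is_subspace Zs.
  split; first by exists 0; [exact: subsp0|exists 0; [exact: subsp0|rewrite addr0]].
  move=> a _ _ [u1 hu1 [r1 hr1 ->]] [u2 hu2 [r2 hr2 ->]].
  exists (a *: u1 + u2); first by case: hU => _; apply.
  exists (a *: r1 + r2); first by case: hradS => _; apply.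
  by rewrite scalerDr addrACA.
have hZW : Zs `<=` W.
  move=> _ [u1 hu1 [r1 [Wr1 _] ->]]; apply: subspD => //; exact: hUW.
have hZpos : forall y, Zs y -> 0 <= complex.Re (h * S y y).
  move=> _ [u1 hu1 [r1 [Wr1 hr1] ->]].
  have Wu1 := hUW _ hu1.
  have -> : S (u1 + r1) (u1 + r1) = S u1 u1.
    have := hSl 1 u1 r1 (u1 + r1) Wu1 Wr1 (subspD hWs Wu1 Wr1).
    rewrite scale1r mul1r => ->; rewrite hr1 ?addr0; last exact: subspD.
    have := hSr 1 u1 r1 u1 Wu1 Wr1 Wu1; rewrite scale1r => ->.
    rewrite (hSh _ _ Wr1 Wu1) hr1 // conjc0 addr0.
    by rewrite conjC1 mul1r.
  case: (eqVneq u1 0) => [e|nz].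
    by rewrite e (S0 0 (subsp0 hWs)) mulr0.
  exact/Re_ge0/ltW/hUp.
pose y := catf u rr.
have hyZ : forall i, Zs (y i).
  move=> i; rewrite /y /catf; case: (fintype.split i) => a.
    exists (u a) => //; exists 0; [exact: subsp0|by rewrite addr0].
  exists 0; first exact: subsp0.
  by exists (rr a) => //; rewrite add0r.
have hyind : lin_indep_mod [set 0] y.
  move=> tau hs.
  have hs' : \sum_(i < m + k) tau i *: y i = 0 := hs.
  rewrite big_split_ord /= in hs'.
  set u' := \sum_(a < m) _ in hs'; set r' := \sum_(b < k) _ in hs'.
  have eu : u' = \sum_(a < m) tau (lshift k a) *: u a.
    by apply: eq_bigr => a _; rewrite /y catf_l.
  have er : r' = \sum_(b < k) tau (rshift m b) *: rr b.
    by apply: eq_bigr => b _; rewrite /y catf_r.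
  have Uu' : U u' by rewrite eu; apply: subsp_sum => // a _; apply: subspZ.
  have Rr' : radical S W r'.
    by rewrite er; apply: subsp_sum => // b _; apply: subspZ.
  have Ru' : radical S W u'.
    have -> : u' = - r' by apply/eqP; rewrite -addr_eq0 hs'.
    exact: subspN.
  have u'0 : u' = 0.
    apply: contrapT => /eqP nz; have := hUp _ Uu' nz.
    by case: Ru' => Wu' ->; rewrite ?mulr0 ?ltxx.
  have r'0 : r' = 0 by move: hs'; rewrite u'0 add0r.
  have hu0 := huind (fun a => tau (lshift k a)) (etrans (esym eu) u'0).
  have hr0 : forall b, tau (rshift m b) = 0.
    apply: hrind; rewrite -er r'0; exact: subsp0 hW0.1.
  move=> i; case: (splitP i) => [a ea|b eb].
    by have -> : i = lshift k a by apply: val_inj.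
  by have -> : i = rshift m b by apply: val_inj.
have [z [hrf hzZ]] := build hZs hyZ hyind hlt.
exact: (core hal hdec hVs hbs hneg h1 hc0 g0 erefl d0 hdlt hd hnear hZs hZW hZpos hrf hzZ).
Qed.
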